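(* For every $\omega$-type $\tau$, the set $\mathbb P_\tau$ is a Borel subset of $\mathcal P(\omega^2)$ and is dense in $\mathbb P$: for every $A\in\mathbb P$ there is $B\subseteq A$ with $B\in\mathbb P_\tau$. Consequently $\mathbb P$ is partitioned into continuum many dense Borel pieces $\mathbb P_\tau$.
   Context: $\mathcal P(\omega^2)$ is identified with $2^{\omega^2}$ with the product topology. $\mathbb P$ is the set of all $A\subseteq\omega^2$ such that: (1) $A$ has infinitely many infinite sections and no nonempty finite sections, where $A(x)=\{y:\langle x,y\rangle\in A\}$; (2) sections pairwise disjoint; (3) every $\langle x,y\rangle\in A$ has $x<y$; (4) for $\langle x,y\rangle,\langle x',y'\rangle\in A$, $x\neq y'$. An $\omega$-type is a linear pre-order of formal symbols $x_1,x_2,\dots,y_1,y_2,\dots$ such that $y_1<y_2<\dots$, each $x_i$ precedes $y_i$, each equivalence class is either a single $y_i$ or infinitely many $x_i$'s, there are infinitely many equivalence classes of $x$'s, and the induced order of equivalence classes has order type $\omega$. An element $A\in\mathbb P$, listed as $\{\langle a_i,b_i\rangle:i\ge1\}$ with $b_1<b_2<\cdots$, realizes the $\omega$-type consisting of exactly those inequalities among the symbols that hold when $x_i$ is interpreted as $a_i$ and $y_j$ as $b_j$ (each $A\in\mathbb P$ realizes a unique $\omega$-type). $\mathbb P_\tau$ is the set of elements of $\mathbb P$ realizing $\tau$. *)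

(* Defs.v *)
From Stdlib Require Import Arith List.
Import ListNotations.

(* P(omega^2) identified with 2^(omega^2): a subset A of omega^2 is a
   function A : nat -> nat -> bool; <x,y> \in A iff A x y = true. *)
Definition set2 := nat -> nat -> bool.

(* Borel subsets of 2^(omega^2) with the product topology: the sigma-algebra
   generated by the subbasic clopen sets {A | <x,y> \in A}. *)
Inductive Borel : (set2 -> Prop) -> Prop :=
| Borel_basic (x y : nat) : Borel (fun A => A x y = true)
| Borel_compl (S : set2 -> Prop) : Borel S -> Borel (fun A => ~ S A)
| Borel_union (F : nat -> set2 -> Prop) :
    (forall n, Borel (F n)) -> Borel (fun A => exists n, F n A)
| Borel_ext (S T : set2 -> Prop) :
    Borel S -> (forall A, S A <-> T A) -> Borel T.

Definition infinite_nat (P : nat -> Prop) : Prop :=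
  forall n, exists m, n <= m /\ P m.

Definition section (A : set2) (x : nat) : nat -> Prop := fun y => A x y = true.

Definition inP (A : set2) : Prop :=
  infinite_nat (fun x => infinite_nat (section A x)) /\
  (forall x, (exists y, section A x y) -> infinite_nat (section A x)) /\
  (forall x x' y, A x y = true -> A x' y = true -> x = x') /\
  (forall x y, A x y = true -> x < y) /\
  (forall x y x' y', A x y = true -> A x' y' = true -> x <> y').

(* formal symbols; SX i stands for x_{i+1}, SY i for y_{i+1} (0-indexed) *)
Inductive Sym : Type := SX (i : nat) | SY (i : nat).

Section Preorder.
Variable le : Sym -> Sym -> Prop.
Definition slt (s t : Sym) : Prop := le s t /\ ~ le t s.
Definition seqv (s t : Sym) : Prop := le s t /\ le t s.

Definition omega_type : Prop :=
  (forall s, le s s) /\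
  (forall s t u, le s t -> le t u -> le s u) /\
  (forall s t, le s t \/ le t s) /\
  (forall i j, i < j -> slt (SY i) (SY j)) /\
  (forall i, slt (SX i) (SY i)) /\
  (forall s,
     (exists i, s = SY i /\ forall t, seqv s t -> t = SY i) \/
     ((forall t, seqv s t -> exists j, t = SX j) /\
      infinite_nat (fun j => seqv s (SX j)))) /\
  (* infinitely many classes of x's *)
  (forall l : list Sym, exists i, forall t, In t l -> ~ seqv (SX i) t) /\
  (* classes ordered in type omega: each class has finitely many predecessors
     (together with infinitely many classes this is order type omega) *)
  (forall s, exists l : list Sym,
     forall t, slt t s -> exists u, In u l /\ seqv t u).
End Preorder.

Definition interp (a b : nat -> nat) (s : Sym) : nat :=
  match s with SX i => a i | SY j => b j end.

Definition realizes (A : set2) (le : Sym -> Sym -> Prop) : Prop :=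
  exists a b : nat -> nat,
    (forall i j, i < j -> b i < b j) /\
    (forall x y, A x y = true <-> exists i, a i = x /\ b i = y) /\
    (forall s t, le s t <-> interp a b s <= interp a b t).

Definition P_tau (le : Sym -> Sym -> Prop) (A : set2) : Prop :=
  inP A /\ realizes A le.

Definition subset2 (B A : set2) : Prop :=
  forall x y, B x y = true -> A x y = true.

(* Main.v *)
Require Import Defs.
From Stdlib Require Import Bool Arith List Lia Classical ClassicalEpsilon FunctionalExtensionality.
From Stdlib Require Cantor.
Import ListNotations.

Definition ord (a b : nat -> nat) (s t : Sym) : Prop := interp a b s <= interp a b t.

Record good (a b : nat -> nat) : Prop := {
  g1 : forall i j, i < j -> b i < b j;
  g2 : forall i, a i < b i;
  g3 : forall i j, a i <> b j;
  g4 : forall i n, exists j, n <= j /\ a j = a i;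
  g5 : forall n, exists i, n <= a i }.

Lemma smono_ge (b : nat -> nat) : (forall i j, i < j -> b i < b j) -> forall i, i <= b i.
Proof. intros H i; induction i; [lia|]. specialize (H i (S i)); lia. Qed.

Lemma smono_le (b : nat -> nat) : (forall i j, i < j -> b i < b j) ->
  forall i j, b i <= b j -> i <= j.
Proof. intros H i j Hle. destruct (le_lt_dec i j); auto. specialize (H j i); lia. Qed.

Lemma smono_inj (b : nat -> nat) : (forall i j, i < j -> b i < b j) ->
  forall i j, b i = b j -> i = j.
Proof. intros H i j E. pose proof (smono_le b H i j). pose proof (smono_le b H j i). lia. Qed.

Definition Bab (a b : nat -> nat) : set2 := fun x y =>
  existsb (fun i => (a i =? x) && (b i =? y)) (seq 0 (S y)).

Lemma Bab_spec a b : (forall i j, i < j -> b i < b j) ->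
  forall x y, Bab a b x y = true <-> exists i, a i = x /\ b i = y.
Proof.
  intros H x y. unfold Bab. rewrite existsb_exists. split.
  - intros [i [_ Hi]]. apply andb_true_iff in Hi as [H1 H2].
    apply Nat.eqb_eq in H1, H2. eauto.
  - intros [i [H1 H2]]. exists i. split.
    + apply in_seq. pose proof (smono_ge b H i). lia.
    + rewrite H1, H2, !Nat.eqb_refl. reflexivity.
Qed.

Lemma good_inP a b : good a b -> inP (Bab a b).
Proof.
  intros G. pose proof (Bab_spec a b (g1 _ _ G)) as BS.
  assert (Hinf : forall i, infinite_nat (section (Bab a b) (a i))).
  { intros i m. destruct (g4 _ _ G i m) as [j [Hj Ej]]. exists (b j). split.
    - pose proof (smono_ge b (g1 _ _ G) j). lia.
    - unfold section. apply BS. eauto. }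
  split; [|split; [|split; [|split]]].
  - intros n. destruct (g5 _ _ G n) as [i Hi]. exists (a i). auto.
  - intros x [y Hy]. unfold section in Hy. apply BS in Hy as [i [<- _]]. auto.
  - intros x x' y H1 H2. apply BS in H1 as [i [<- Ei]]. apply BS in H2 as [i' [<- Ei']].
    subst. rewrite (smono_inj b (g1 _ _ G) i i'); auto.
  - intros x y H1. apply BS in H1 as [i [<- <-]]. apply (g2 _ _ G).
  - intros x y x' y' H1 H2. apply BS in H1 as [i [<- <-]]. apply BS in H2 as [i' [<- <-]].
    apply (g3 _ _ G).
Qed.

Lemma good_realizes a b : good a b -> realizes (Bab a b) (ord a b).
Proof.
  intros G. exists a, b. split; [apply (g1 _ _ G)|]. split.
  - apply Bab_spec, (g1 _ _ G).
  - unfold ord. tauto.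
Qed.

Lemma list_bound (f : Sym -> nat) (l : list Sym) : exists M, forall t, In t l -> f t <= M.
Proof.
  induction l as [|u l [M HM]]. - exists 0. intros t [].
  - exists (max (f u) M). intros t [<-|Ht]; [lia|]. specialize (HM t Ht). lia.
Qed.

Lemma below_list (f : Sym -> nat) : forall v, exists l, forall t, f t < v -> exists u, In u l /\ f u = f t.
Proof.
  induction v as [|v [l Hl]].
  - exists []. intros t Ht. lia.
  - destruct (classic (exists t, f t = v)) as [[t0 Ht0]|Hn].
    + exists (t0 :: l). intros t Ht. destruct (Nat.eq_dec (f t) v).
      * exists t0. split; [left; auto|lia].
      * destruct (Hl t) as [u [Hu Eu]]; [lia|]. exists u. split; [right|]; auto.
    + exists l. intros t Ht. destruct (Nat.eq_dec (f t) v).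
      * exfalso. apply Hn. eauto.
      * apply Hl. lia.
Qed.

Lemma good_omega a b : good a b -> omega_type (ord a b).
Proof.
  intros G. unfold omega_type, slt, seqv, ord.
  pose proof (g1 _ _ G) as G1. pose proof (g2 _ _ G) as G2. pose proof (g3 _ _ G) as G3.
  split; [intros; lia|]. split; [intros; lia|]. split; [intros; lia|].
  split; [intros i j Hij; specialize (G1 i j Hij); simpl; lia|].
  split; [intros i; specialize (G2 i); simpl; lia|].
  split; [|split].
  - intros [i|i].
    + right. split.
      * intros [j|j] [H1 H2]; simpl in *; [eauto|]. exfalso. apply (G3 i j). lia.
      * intros n. destruct (g4 _ _ G i n) as [j [Hj Ej]]. exists j. simpl. split; [auto|lia].
    + left. exists i. split; auto. intros [j|j] [H1 H2]; simpl in *.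
      * exfalso. apply (G3 j i). lia.
      * f_equal. apply (smono_inj b G1). lia.
  - intros l. destruct (list_bound (interp a b) l) as [M HM].
    destruct (g5 _ _ G (S M)) as [i Hi]. exists i. intros t Ht [H1 H2].
    specialize (HM t Ht). simpl in *. lia.
  - intros s. destruct (below_list (interp a b) (interp a b s)) as [l Hl].
    exists l. intros t [H1 H2]. destruct (Hl t) as [u [Hu Eu]]; [lia|].
    exists u. split; auto. lia.
Qed.

Definition vU (u : nat -> bool) (m : nat) : nat :=
  2 * (2 * (m / 2) + (if u (m / 2) then 1 - m mod 2 else m mod 2)).
Definition aU (u : nat -> bool) (i : nat) : nat := vU u (fst (Cantor.of_nat i)).
Definition b0 (i : nat) : nat := 2 * i + 3.

Lemma fst_of_nat_le i : fst (Cantor.of_nat i) <= i.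
Proof.
  pose proof (Cantor.cancel_to_of i) as E0. destruct (Cantor.of_nat i) as [x y].
  simpl. pose proof (Cantor.to_nat_non_decreasing x y). lia.
Qed.

Lemma div2_2k k : (2 * k) / 2 = k.
Proof. symmetry; apply (Nat.div_unique _ _ _ 0); lia. Qed.
Lemma div2_2k1 k : (2 * k + 1) / 2 = k.
Proof. symmetry; apply (Nat.div_unique _ _ _ 1); lia. Qed.
Lemma mod2_2k k : (2 * k) mod 2 = 0.
Proof. symmetry; apply (Nat.mod_unique _ _ k); lia. Qed.
Lemma mod2_2k1 k : (2 * k + 1) mod 2 = 1.
Proof. symmetry; apply (Nat.mod_unique _ _ k); lia. Qed.

Lemma good_aU u : good (aU u) b0.
Proof.
  constructor.
  - unfold b0; intros; lia.
  - intros i. unfold aU, vU, b0. pose proof (fst_of_nat_le i).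
    set (m := fst (Cantor.of_nat i)) in *.
    pose proof (Nat.Div0.mul_div_le m 2). pose proof (Nat.mod_upper_bound m 2).
    destruct (u (m / 2)); lia.
  - intros i j. unfold aU, vU, b0. lia.
  - intros i n. exists (Cantor.to_nat (fst (Cantor.of_nat i), n)). split.
    + pose proof (Cantor.to_nat_non_decreasing (fst (Cantor.of_nat i)) n). lia.
    + unfold aU. rewrite Cantor.cancel_of_to. reflexivity.
  - intros n. exists (Cantor.to_nat (2 * n, 0)). unfold aU, vU.
    rewrite Cantor.cancel_of_to. simpl fst. pose proof (div2_2k n). simpl in *. lia.
Qed.

Lemma decode u k :
  ord (aU u) b0 (SX (Cantor.to_nat (2 * k, 0))) (SX (Cantor.to_nat (2 * k + 1, 0))) <-> u k = false.
Proof.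
  unfold ord, interp, aU, vU. rewrite !Cantor.cancel_of_to. cbn [fst].
  rewrite div2_2k, div2_2k1, mod2_2k, mod2_2k1.
  destruct (u k); split; intros; try lia; discriminate.
Qed.

Lemma continuum : exists f : (nat -> bool) -> (Sym -> Sym -> Prop),
     (forall u, omega_type (f u)) /\
     (forall u v, (forall s t, f u s t <-> f v s t) -> u = v).
Proof.
  exists (fun u => ord (aU u) b0). split.
  - intros u. apply good_omega, good_aU.
  - intros u v H. apply functional_extensionality. intros k.
    pose proof (H (SX (Cantor.to_nat (2 * k, 0))) (SX (Cantor.to_nat (2 * k + 1, 0)))) as Hk.
    rewrite !decode in Hk. destruct (u k), (v k); try reflexivity; exfalso; intuition discriminate.
Qed.

Definition epsN (P : nat -> Prop) : nat := epsilon (inhabits 0) P.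
Lemma epsN_spec (P : nat -> Prop) : (exists n, P n) -> P (epsN P).
Proof. apply epsilon_spec. Qed.

Lemma least (P : nat -> Prop) : (exists n, P n) -> exists n, P n /\ forall m, m < n -> ~ P m.
Proof.
  intros [n Hn]. revert Hn. induction n as [n IH] using lt_wf_ind. intros Hn.
  destruct (classic (exists m, m < n /\ P m)) as [[m [Hm Pm]]|Hno].
  - exact (IH m Hm Pm).
  - exists n. split; auto. intros m Hm Pm. apply Hno. eauto.
Qed.

Definition Ys (A : set2) (y : nat) : Prop := exists x, A x y = true.

Fixpoint bA (A : set2) (i : nat) : nat :=
  match i with
  | 0 => epsN (fun y => Ys A y /\ forall z, z < y -> ~ Ys A z)
  | S i => epsN (fun y => bA A i < y /\ Ys A y /\ forall z, bA A i < z -> z < y -> ~ Ys A z)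
  end.
Definition aA (A : set2) (i : nat) : nat := epsN (fun x => A x (bA A i) = true).

Section Canon.
Variable A : set2.
Hypothesis HA : inP A.

Lemma Yinf : forall n, exists y, n <= y /\ Ys A y.
Proof.
  intros n. destruct HA as [H1 _]. destruct (H1 0) as [x [_ Hx]].
  destruct (Hx n) as [y [Hy Ay]]. exists y. split; auto. exists x. exact Ay.
Qed.

Lemma bA0 : Ys A (bA A 0) /\ forall z, z < bA A 0 -> ~ Ys A z.
Proof.
  simpl. apply epsN_spec. apply least. destruct (Yinf 0) as [y [_ Hy]]; eauto.
Qed.

Lemma bAS i : bA A i < bA A (S i) /\ Ys A (bA A (S i)) /\
  forall z, bA A i < z -> z < bA A (S i) -> ~ Ys A z.
Proof.
  simpl. apply epsN_spec.
  destruct (least (fun y => bA A i < y /\ Ys A y)) as [y [[H1 H2] H3]].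
  - destruct (Yinf (S (bA A i))) as [y [Hy1 Hy2]]. exists y. split; [lia|auto].
  - exists y. split; [auto|split; auto]. intros z Hz1 Hz2 Yz. apply (H3 z Hz2). auto.
Qed.

Lemma bA_mono : forall i j, i < j -> bA A i < bA A j.
Proof.
  intros i j Hij. induction Hij.
  - apply bAS.
  - pose proof (bAS m). lia.
Qed.

Lemma bA_Y i : Ys A (bA A i).
Proof. destruct i; [apply bA0|apply bAS]. Qed.

Lemma bA_range y : Ys A y -> exists i, bA A i = y.
Proof.
  intros Hy.
  destruct (least (fun i => y < bA A i)) as [i [Hi Hmin]].
  - exists (S y). pose proof (smono_ge _ bA_mono (S y)). lia.
  - destruct i as [|j].
    + exfalso. destruct bA0 as [_ H0]. exact (H0 y Hi Hy).
    + exists j. assert (bA A j <= y) by (pose proof (Hmin j); lia).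
      destruct (Nat.eq_dec (bA A j) y); auto. exfalso.
      destruct (bAS j) as [_ [_ H3]]. apply (H3 y); auto. lia.
Qed.

Lemma aA_spec i : A (aA A i) (bA A i) = true.
Proof. unfold aA. apply epsN_spec. apply bA_Y. Qed.

Lemma canon_spec : forall x y, A x y = true <-> exists i, aA A i = x /\ bA A i = y.
Proof.
  intros x y. split.
  - intros Hxy. destruct (bA_range y) as [i Hi]; [exists x; auto|].
    exists i. split; auto. destruct HA as [_ [_ [H3 _]]].
    apply (H3 _ _ (bA A i)); [apply aA_spec|]. rewrite Hi; auto.
  - intros [i [<- <-]]. apply aA_spec.
Qed.

Lemma good_canon : good (aA A) (bA A).
Proof.
  destruct HA as [H1 [H2 [H3 [H4 H5]]]].
  constructor.
  - apply bA_mono.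
  - intros i. apply H4, aA_spec.
  - intros i j. apply (H5 _ (bA A i) (aA A j) _); apply aA_spec.
  - intros i n. assert (Hinf : infinite_nat (section A (aA A i))).
    { apply H2. exists (bA A i). apply aA_spec. }
    destruct (Hinf (bA A n)) as [y [Hy Ay]]. unfold section in Ay.
    apply canon_spec in Ay as [j [Ej Fj]]. exists j. split; auto.
    apply (smono_le _ bA_mono). lia.
  - intros n. destruct (H1 n) as [x [Hx Hinf]]. destruct (Hinf 0) as [y [_ Ay]].
    apply canon_spec in Ay as [i [Ei _]]. exists i. lia.
Qed.
End Canon.

Lemma enum_half (b b' : nat -> nat) (Y : nat -> Prop) :
  (forall i j, i < j -> b i < b j) -> (forall i j, i < j -> b' i < b' j) ->
  (forall y, Y y <-> exists i, b i = y) -> (forall y, Y y <-> exists i, b' i = y) ->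
  forall i, (forall j, j < i -> b j = b' j) -> b' i <= b i.
Proof.
  intros M M' R R' i Hj.
  assert (Y (b i)) by (apply R; eauto). apply R' in H as [k Hk].
  destruct (le_lt_dec i k).
  - destruct (Nat.eq_dec i k); [subst; lia|]. specialize (M' i k). rewrite <- Hk. lia.
  - exfalso. rewrite <- (Hj k l) in Hk. apply (smono_inj b M) in Hk. lia.
Qed.

Lemma enum_unique (A : set2) (HA : inP A) a b a' b' :
  (forall i j, i < j -> b i < b j) ->
  (forall x y, A x y = true <-> exists i, a i = x /\ b i = y) ->
  (forall i j, i < j -> b' i < b' j) ->
  (forall x y, A x y = true <-> exists i, a' i = x /\ b' i = y) ->
  forall i, a i = a' i /\ b i = b' i.
Proof.
  intros M R M' R'.
  assert (RY : forall y, Ys A y <-> exists i, b i = y).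
  { intros y. split. - intros [x Hx]. apply R in Hx as [i [_ Hi]]. eauto.
    - intros [i Hi]. exists (a i). apply R. eauto. }
  assert (RY' : forall y, Ys A y <-> exists i, b' i = y).
  { intros y. split. - intros [x Hx]. apply R' in Hx as [i [_ Hi]]. eauto.
    - intros [i Hi]. exists (a' i). apply R'. eauto. }
  assert (Hb : forall n i, i < n -> b i = b' i).
  { induction n as [|n IH]; intros i Hi; [lia|].
    destruct (Nat.eq_dec i n); [|apply IH; lia]. subst i.
    pose proof (enum_half b b' (Ys A) M M' RY RY' n IH).
    assert (IH' : forall j, j < n -> b' j = b j) by (intros; symmetry; auto).
    pose proof (enum_half b' b (Ys A) M' M RY' RY n IH'). lia. }
  intros i. assert (E : b i = b' i) by (apply (Hb (S i)); lia). split; auto.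
  destruct HA as [_ [_ [H3 _]]]. apply (H3 _ _ (b i)).
  - apply R. eauto.
  - rewrite E. apply R'. eauto.
Qed.

Lemma exist_type (A : set2) : inP A -> exists tau, omega_type tau /\ P_tau tau A.
Proof.
  intros HA. exists (ord (aA A) (bA A)). split.
  - apply good_omega, good_canon, HA.
  - split; auto. exists (aA A), (bA A). split; [apply bA_mono; auto|]. split.
    + apply canon_spec; auto.
    + unfold ord; tauto.
Qed.

Lemma interp_eq a b a' b' : (forall i, a i = a' i /\ b i = b' i) -> forall s, interp a b s = interp a' b' s.
Proof. intros H [i|i]; simpl; apply H. Qed.

Lemma uniq_type (A : set2) tau tau' : P_tau tau A -> P_tau tau' A ->
  forall s t, tau s t <-> tau' s t.
Proof.
  intros [HA [a [b [M [R O]]]]] [_ [a' [b' [M' [R' O']]]]] s t.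
  pose proof (interp_eq _ _ _ _ (enum_unique A HA a b a' b' M R M' R')) as E.
  rewrite O, O', !E. tauto.
Qed.

Lemma Borel_or (S T : set2 -> Prop) : Borel S -> Borel T -> Borel (fun A => S A \/ T A).
Proof.
  intros HS HT. apply (Borel_ext (fun A => exists n, (match n with 0 => S | _ => T end) A)).
  - apply Borel_union. intros [|n]; auto.
  - intros A. split.
    + intros [[|n] H]; auto.
    + intros [H|H]; [exists 0|exists 1]; auto.
Qed.

Lemma Borel_not (S : set2 -> Prop) : Borel S -> Borel (fun A => ~ S A).
Proof. apply Borel_compl. Qed.

Lemma Borel_and (S T : set2 -> Prop) : Borel S -> Borel T -> Borel (fun A => S A /\ T A).
Proof.
  intros HS HT. apply (Borel_ext (fun A => ~ (~ S A \/ ~ T A))).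
  - apply Borel_not, Borel_or; apply Borel_not; auto.
  - intros A. tauto.
Qed.

Lemma Borel_impl (S T : set2 -> Prop) : Borel S -> Borel T -> Borel (fun A => S A -> T A).
Proof.
  intros HS HT. apply (Borel_ext (fun A => ~ S A \/ T A)).
  - apply Borel_or; [apply Borel_not|]; auto.
  - intros A. tauto.
Qed.

Lemma Borel_iff (S T : set2 -> Prop) : Borel S -> Borel T -> Borel (fun A => S A <-> T A).
Proof.
  intros HS HT. apply (Borel_ext (fun A => (S A -> T A) /\ (T A -> S A))).
  - apply Borel_and; apply Borel_impl; auto.
  - intros A. tauto.
Qed.

Lemma Borel_ex (F : nat -> set2 -> Prop) : (forall n, Borel (F n)) -> Borel (fun A => exists n, F n A).
Proof. apply Borel_union. Qed.

Lemma Borel_all (F : nat -> set2 -> Prop) : (forall n, Borel (F n)) -> Borel (fun A => forall n, F n A).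
Proof.
  intros H. apply (Borel_ext (fun A => ~ exists n, ~ F n A)).
  - apply Borel_not, Borel_ex. intros n. apply Borel_not, H.
  - intros A. split.
    + intros Hn n. apply NNPP. intros Hc. apply Hn. eauto.
    + intros Ha [n Hn]. auto.
Qed.

Lemma Borel_allSym (F : Sym -> set2 -> Prop) : (forall s, Borel (F s)) -> Borel (fun A => forall s, F s A).
Proof.
  intros H. apply (Borel_ext (fun A => (forall n, F (SX n) A) /\ (forall n, F (SY n) A))).
  - apply Borel_and; apply Borel_all; intros; apply H.
  - intros A. split.
    + intros [H1 H2] [n|n]; auto.
    + intros H1. split; intros; apply H1.
Qed.

Lemma Borel_const (P : Prop) : Borel (fun _ => P).
Proof.
  assert (HT : Borel (fun A => A 0 0 = true \/ ~ A 0 0 = true)).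
  { apply Borel_or; [|apply Borel_not]; apply Borel_basic. }
  destruct (classic P) as [Hp|Hp].
  - apply (Borel_ext _ _ HT). intros A. split; auto. intros _. apply classic.
  - apply (Borel_ext _ _ (Borel_not _ HT)). intros A. split; [|tauto].
    intros H. exfalso. apply H, classic.
Qed.

Lemma Borel_list (L : list (nat * nat)) : forall g : list bool -> Prop,
  Borel (fun A => g (map (fun c => A (fst c) (snd c)) L)).
Proof.
  induction L as [|c L IH]; intros g.
  - simpl. apply Borel_const.
  - apply (Borel_ext (fun A => (A (fst c) (snd c) = true /\ (fun l => g (true :: l)) (map (fun c => A (fst c) (snd c)) L))
                            \/ (~ A (fst c) (snd c) = true /\ (fun l => g (false :: l)) (map (fun c => A (fst c) (snd c)) L)))).
    + apply Borel_or; apply Borel_and.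
      * apply Borel_basic.
      * exact (IH (fun l => g (true :: l))).
      * apply Borel_not, Borel_basic.
      * exact (IH (fun l => g (false :: l))).
    + intros A. simpl. destruct (A (fst c) (snd c)); split; intros H.
      * destruct H as [[_ H]|[H _]]; auto. congruence.
      * left; auto.
      * destruct H as [[H _]|[_ H]]; auto. congruence.
      * right; split; auto.
Qed.

Lemma Borel_local (N : nat) (S : set2 -> Prop) :
  (forall A A', (forall x y, x < N -> y < N -> A x y = A' x y) -> S A -> S A') -> Borel S.
Proof.
  intros HS. set (L := list_prod (seq 0 N) (seq 0 N)).
  apply (Borel_ext (fun A => (fun l => exists A', map (fun c => A' (fst c) (snd c)) L = l /\ S A')
                              (map (fun c => A (fst c) (snd c)) L))).
  - exact (Borel_list L (fun l => exists A', map (fun c => A' (fst c) (snd c)) L = l /\ S A')).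
  - intros A. split.
    + intros [A' [E HA']]. apply (HS A' A); auto.
      intros x y Hx Hy. apply (map_ext_in_iff) with (a := (x, y)) in E; auto.
      apply in_prod_iff. split; apply in_seq; lia.
    + intros HA. exists A. auto.
Qed.

Ltac borel := repeat (first [ apply Borel_const | apply Borel_basic | apply Borel_and | apply Borel_or
  | apply Borel_iff | apply Borel_impl | apply Borel_not | apply Borel_ex | apply Borel_all
  | apply Borel_allSym | intro ]).

Lemma Borel_inP : Borel inP.
Proof.
  unfold inP, infinite_nat, section. borel.
Qed.

Definition Yb (A : set2) (q : nat) : bool := existsb (fun x => A x q) (seq 0 q).
Fixpoint cntY (A : set2) (p : nat) : nat :=
  match p with 0 => 0 | S q => cntY A q + (if Yb A q then 1 else 0) end.
Definition PosY (A : set2) (j p : nat) : Prop := Yb A p = true /\ cntY A p = j.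
Definition PosX (A : set2) (j x : nat) : Prop := exists p, PosY A j p /\ A x p = true.
Definition Pos (A : set2) (s : Sym) (v : nat) : Prop :=
  match s with SX j => PosX A j v | SY j => PosY A j v end.
Definition Phi (tau : Sym -> Sym -> Prop) (A : set2) : Prop :=
  forall s t, tau s t <-> exists p q, p <= q /\ Pos A s p /\ Pos A t q.

Lemma existsb_ext_in {T} (f g : T -> bool) l : (forall x, In x l -> f x = g x) -> existsb f l = existsb g l.
Proof.
  induction l as [|x l IH]; intros H; simpl; auto.
  rewrite H by (left; auto). rewrite IH; auto. intros; apply H; right; auto.
Qed.

Lemma Yb_local N A A' q : (forall x y, x < N -> y < N -> A x y = A' x y) -> q < N -> Yb A q = Yb A' q.
Proof.
  intros H Hq. unfold Yb. apply existsb_ext_in. intros x Hx. apply in_seq in Hx. apply H; lia.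
Qed.

Lemma cntY_local N A A' p : (forall x y, x < N -> y < N -> A x y = A' x y) -> p <= N -> cntY A p = cntY A' p.
Proof.
  intros H. induction p as [|p IH]; intros Hp; simpl; auto.
  rewrite IH by lia. rewrite (Yb_local N A A' p); auto.
Qed.

Lemma Borel_PosY j p : Borel (fun A => PosY A j p).
Proof.
  apply (Borel_local (S p)). intros A A' H [H1 H2]. split.
  - rewrite <- (Yb_local (S p) A A' p); auto.
  - rewrite <- (cntY_local (S p) A A' p); auto.
Qed.

Lemma Borel_PosX j x : Borel (fun A => PosX A j x).
Proof.
  unfold PosX. apply Borel_ex. intros p. apply Borel_and; [apply Borel_PosY|apply Borel_basic].
Qed.

Lemma Borel_Pos s v : Borel (fun A => Pos A s v).
Proof. destruct s; [apply Borel_PosX|apply Borel_PosY]. Qed.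

Lemma Borel_Phi tau : Borel (Phi tau).
Proof.
  unfold Phi. apply Borel_allSym; intros s. apply Borel_allSym; intros t.
  apply Borel_iff; [apply Borel_const|]. apply Borel_ex; intros p. apply Borel_ex; intros q.
  apply Borel_and; [apply Borel_const|]. apply Borel_and; apply Borel_Pos.
Qed.

Section PosCanon.
Variable A : set2.
Hypothesis HA : inP A.

Lemma Yb_Ys q : Yb A q = true <-> Ys A q.
Proof.
  unfold Yb. rewrite existsb_exists. split.
  - intros [x [_ Hx]]. exists x; auto.
  - intros [x Hx]. exists x. split; auto. apply in_seq. destruct HA as [_ [_ [_ [H4 _]]]].
    specialize (H4 _ _ Hx). lia.
Qed.

Lemma cnt_gap m d : (forall z, m <= z -> z < m + d -> ~ Ys A z) -> cntY A (m + d) = cntY A m.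
Proof.
  induction d as [|d IH]; intros H; [rewrite Nat.add_0_r; auto|].
  rewrite Nat.add_succ_r. simpl. rewrite IH by (intros; apply H; lia).
  destruct (Yb A (m + d)) eqn:E; [|lia]. exfalso. apply Yb_Ys in E. apply (H (m + d)); auto; lia.
Qed.

Lemma cnt_bA j : cntY A (bA A j) = j.
Proof.
  induction j as [|j IH].
  - pose proof (cnt_gap 0 (bA A 0)) as G. simpl in G. apply G.
    intros z _ Hz. apply (bA0 A HA); auto.
  - destruct (bAS A HA j) as [H1 [H2 H3]].
    pose proof (cnt_gap (S (bA A j)) (bA A (S j) - S (bA A j))) as G.
    replace (S (bA A j) + (bA A (S j) - S (bA A j))) with (bA A (S j)) in G by lia.
    rewrite G by (intros z Hz1 Hz2; apply H3; lia).
    assert (E : Yb A (bA A j) = true) by (apply Yb_Ys, bA_Y, HA).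
    simpl. rewrite IH, E. lia.
Qed.

Lemma PosY_canon j p : PosY A j p <-> bA A j = p.
Proof.
  unfold PosY. split.
  - intros [H1 H2]. apply Yb_Ys in H1. destruct (bA_range A HA p H1) as [i Hi].
    subst p. rewrite cnt_bA in H2. subst; auto.
  - intros <-. split; [apply Yb_Ys, bA_Y, HA|apply cnt_bA].
Qed.

Lemma Pos_canon s v : Pos A s v <-> interp (aA A) (bA A) s = v.
Proof.
  destruct s as [j|j]; simpl; [|apply PosY_canon].
  unfold PosX. split.
  - intros [p [Hp Hx]]. apply PosY_canon in Hp. subst p.
    destruct HA as [_ [_ [H3 _]]]. symmetry. apply (H3 _ _ (bA A j)); auto. apply aA_spec, HA.
  - intros <-. exists (bA A j). split; [apply PosY_canon; auto|apply aA_spec, HA].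
Qed.

Lemma realizes_Phi tau : realizes A tau <-> Phi tau A.
Proof.
  assert (KEY : forall s t, (interp (aA A) (bA A) s <= interp (aA A) (bA A) t) <->
             exists p q, p <= q /\ Pos A s p /\ Pos A t q).
  { intros s t. split.
    - intros H. exists (interp (aA A) (bA A) s), (interp (aA A) (bA A) t).
      split; auto. split; apply Pos_canon; auto.
    - intros [p [q [H [H1 H2]]]]. apply Pos_canon in H1, H2. lia. }
  split.
  - intros [a [b [M [R O]]]] s t.
    pose proof (interp_eq _ _ _ _ (enum_unique A HA a b (aA A) (bA A) M R (bA_mono A HA) (canon_spec A HA))) as E.
    rewrite O, !E. apply KEY.
  - intros H. exists (aA A), (bA A). split; [apply bA_mono, HA|]. split; [apply canon_spec, HA|].
    intros s t. rewrite (H s t). symmetry. apply KEY.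
Qed.
End PosCanon.

Lemma Borel_P_tau tau : Borel (P_tau tau).
Proof.
  apply (Borel_ext (fun A => inP A /\ Phi tau A)).
  - apply Borel_and; [apply Borel_inP|apply Borel_Phi].
  - intros A. unfold P_tau. split; intros [H1 H2]; split; auto; apply (realizes_Phi A H1); auto.
Qed.

Definition epsS (P : Sym -> Prop) : Sym := epsilon (inhabits (SX 0)) P.
Lemma epsS_spec (P : Sym -> Prop) : (exists s, P s) -> P (epsS P).
Proof. apply epsilon_spec. Qed.

Lemma filter_length_lt {T} (f : T -> bool) l x : In x l -> f x = false -> length (filter f l) < length l.
Proof.
  induction l as [|y l IH]; intros Hx Hf; [destruct Hx|].
  simpl. destruct Hx as [<-|Hx].
  - rewrite Hf. pose proof (filter_length_le f l). simpl; lia.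
  - destruct (f y); simpl; specialize (IH Hx Hf); lia.
Qed.

Section Dens.
Variable le : Sym -> Sym -> Prop.
Hypothesis Hot : omega_type le.
Variable A : set2.
Hypothesis HA : inP A.

Lemma L_refl s : le s s. Proof. apply Hot. Qed.
Lemma L_trans s t u : le s t -> le t u -> le s u. Proof. apply Hot. Qed.
Lemma L_tot s t : le s t \/ le t s. Proof. apply Hot. Qed.
Lemma L_Y i j : i < j -> slt le (SY i) (SY j). Proof. apply Hot. Qed.
Lemma L_XY i : slt le (SX i) (SY i). Proof. apply Hot. Qed.
Lemma L_cls s : (exists i, s = SY i /\ forall t, seqv le s t -> t = SY i) \/
     ((forall t, seqv le s t -> exists j, t = SX j) /\ infinite_nat (fun j => seqv le s (SX j))).
Proof. apply Hot. Qed.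
Lemma L_inf (l : list Sym) : exists i, forall t, In t l -> ~ seqv le (SX i) t.
Proof. apply Hot. Qed.
Lemma L_fin s : exists l : list Sym, forall t, slt le t s -> exists u, In u l /\ seqv le t u.
Proof. apply Hot. Qed.

Lemma not_le_slt s t : ~ le s t -> slt le t s.
Proof. intros H. split; auto. destruct (L_tot s t); tauto. Qed.

Lemma cls_SX i : (forall t, seqv le (SX i) t -> exists j, t = SX j) /\ infinite_nat (fun j => seqv le (SX i) (SX j)).
Proof. destruct (L_cls (SX i)) as [[i' [E _]]|H]; [discriminate|exact H]. Qed.

Lemma cls_SY i t : seqv le (SY i) t -> t = SY i.
Proof.
  intros Ht. destruct (L_cls (SY i)) as [[i' [E H]]|[H _]].
  - injection E as <-. auto.
  - destruct (H (SY i)) as [j E]; [split; apply L_refl|discriminate].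
Qed.

Lemma min_exists (P : Sym -> Prop) : (exists s, P s) -> exists m, P m /\ forall t, P t -> le m t.
Proof.
  intros [s0 Hs0]. destruct (L_fin s0) as [l Hl].
  assert (MAIN : forall n l s0, length l <= n -> P s0 ->
     (forall t, slt le t s0 -> exists u, In u l /\ seqv le t u) ->
     exists m, P m /\ forall t, P t -> le m t).
  { clear s0 Hs0 l Hl. induction n as [|n IH]; intros l s0 Hlen Ps0 Hcov;
    (destruct (classic (forall t, P t -> le s0 t)) as [Hmin|Hnm]; [exists s0; auto|]);
    (destruct (not_all_ex_not _ _ Hnm) as [t Ht];
     assert (Pt : P t) by (apply NNPP; intros C; apply Ht; intros; contradiction);
     assert (Lt : slt le t s0) by (apply not_le_slt; intros C; apply Ht; auto);
     destruct (Hcov t Lt) as [u0 [Hu0 Eu0]]).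
    - destruct l; [destruct Hu0|simpl in Hlen; lia].
    - set (f := fun u => if excluded_middle_informative (seqv le t u) then false else true).
      apply (IH (filter f l) t).
      + pose proof (filter_length_lt f l u0 Hu0). unfold f at 1 in H.
        destruct (excluded_middle_informative (seqv le t u0)); [|contradiction]. lia.
      + exact Pt.
      + intros t' Ht'. assert (Lt' : slt le t' s0).
        { destruct Ht' as [H1 H2], Lt as [H3 H4]. split; [eapply L_trans; eauto|].
          intros C. apply H4. eapply L_trans; eauto. }
        destruct (Hcov t' Lt') as [u [Hu Eu]]. exists u. split; auto.
        apply filter_In. split; auto. unfold f.
        destruct (excluded_middle_informative (seqv le t u)) as [E|E]; auto.
        exfalso. destruct Ht' as [H1 H2], E as [E1 E2], Eu as [E3 E4]. apply H2.
        eapply L_trans; eauto. }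
  eapply (MAIN (length l) l s0); eauto.
Qed.

Fixpoint rep (k : nat) : Sym :=
  match k with
  | 0 => epsS (fun m => forall t, le m t)
  | S k => epsS (fun m => slt le (rep k) m /\ forall t, slt le (rep k) t -> le m t)
  end.

Lemma rep0_spec t : le (rep 0) t.
Proof.
  revert t. simpl. apply epsS_spec.
  destruct (min_exists (fun _ => True)) as [m [_ Hm]]; [exists (SX 0); auto|].
  exists m; auto.
Qed.

Lemma above_exists s : exists t, slt le s t.
Proof.
  destruct (L_fin s) as [l Hl]. destruct (L_inf (s :: l)) as [i Hi].
  exists (SX i). apply not_le_slt. intros C.
  destruct (L_tot s (SX i)) as [D|D].
  - apply (Hi s); [left; auto|split; auto].
  - destruct (classic (le s (SX i))) as [D'|D']; [apply (Hi s); [left|split]; auto|].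
    destruct (Hl (SX i)) as [u [Hu Eu]]; [split; auto|].
    apply (Hi u); [right; auto|auto].
Qed.

Lemma repS_spec k : slt le (rep k) (rep (S k)) /\ forall t, slt le (rep k) t -> le (rep (S k)) t.
Proof.
  simpl. apply epsS_spec. apply min_exists. apply above_exists.
Qed.

Lemma slt_trans s t u : slt le s t -> slt le t u -> slt le s u.
Proof.
  intros [H1 H2] [H3 H4]. split; [eapply L_trans; eauto|]. intros C. apply H2. eapply L_trans; eauto.
Qed.

Lemma rep_lt j k : j < k -> slt le (rep j) (rep k).
Proof.
  intros H. induction H; [apply repS_spec|]. eapply slt_trans; eauto. apply repS_spec.
Qed.

Lemma rep_le j k : j <= k -> le (rep j) (rep k).
Proof.
  intros H. destruct (Nat.eq_dec j k); [subst; apply L_refl|]. apply rep_lt. lia.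
Qed.

Lemma rep_noneq j k : j <> k -> ~ seqv le (rep j) (rep k).
Proof.
  intros H [H1 H2]. destruct (Nat.lt_gt_cases j k) as [[D|D] _]; [auto|..].
  - destruct (rep_lt j k D). contradiction.
  - destruct (rep_lt k j D). contradiction.
Qed.

Lemma seqv_trans s t u : seqv le s t -> seqv le t u -> seqv le s u.
Proof. intros [H1 H2] [H3 H4]. split; eapply L_trans; eauto. Qed.
Lemma seqv_sym s t : seqv le s t -> seqv le t s.
Proof. intros [H1 H2]. split; auto. Qed.

Lemma pigeon (l : list Sym) : forall f : nat -> Sym,
  (forall j k, j <> k -> ~ seqv le (f j) (f k)) ->
  (forall k, exists u, In u l /\ seqv le (f k) u) -> False.
Proof.
  induction l as [|u l IH]; intros f Hinj Hcov.
  - destruct (Hcov 0) as [u [[] _]].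
  - destruct (classic (exists k0, seqv le (f k0) u)) as [[k0 Hk0]|Hno].
    + set (ix := fun k => if k <? k0 then k else S k).
      assert (ixn : forall k, ix k <> k0).
      { intros k. unfold ix. destruct (Nat.ltb_spec k k0); lia. }
      assert (ixi : forall j k, j <> k -> ix j <> ix k).
      { intros j k. unfold ix. destruct (Nat.ltb_spec j k0), (Nat.ltb_spec k k0); lia. }
      apply (IH (fun k => f (ix k))).
      * intros j k H. apply Hinj, ixi, H.
      * intros k. destruct (Hcov (ix k)) as [u' [[<-|Hu'] E]].
        -- exfalso. apply (Hinj (ix k) k0 (ixn k)). eapply seqv_trans; [exact E|]. apply seqv_sym; auto.
        -- eauto.
    + apply (IH f Hinj). intros k. destruct (Hcov k) as [u' [[<-|Hu'] E]].
      * exfalso. apply Hno. eauto.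
      * eauto.
Qed.

Lemma exhaust s : exists k, seqv le s (rep k).
Proof.
  assert (Hk : exists k, le s (rep k)).
  { apply NNPP. intros C. destruct (L_fin s) as [l Hl].
    apply (pigeon l rep rep_noneq). intros k. apply Hl. apply not_le_slt.
    intros D. apply C. eauto. }
  destruct Hk as [k Hk]. revert s Hk. induction k as [|k IH]; intros s Hk.
  - exists 0. split; auto. apply rep0_spec.
  - destruct (classic (le s (rep k))) as [D|D]; [apply IH; auto|].
    exists (S k). split; auto. apply repS_spec. apply not_le_slt; auto.
Qed.

Definition r (s : Sym) : nat := epsN (fun k => seqv le s (rep k)).
Lemma r_spec s : seqv le s (rep (r s)).
Proof. unfold r. apply epsN_spec, exhaust. Qed.

Lemma le_r s t : le s t <-> r s <= r t.
Proof.
  destruct (r_spec s) as [S1 S2], (r_spec t) as [T1 T2]. split.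
  - intros H. destruct (le_lt_dec (r s) (r t)) as [D|D]; auto. exfalso.
    destruct (rep_lt _ _ D) as [_ N]. apply N. eapply L_trans; [exact S2|]. eapply L_trans; [exact H|exact T1].
  - intros H. eapply L_trans; [exact S1|]. eapply L_trans; [apply rep_le, H|]. auto.
Qed.

Lemma r_rep k : r (rep k) = k.
Proof.
  destruct (Nat.eq_dec (r (rep k)) k) as [E|E]; auto. exfalso.
  apply (rep_noneq k (r (rep k))); [auto|apply r_spec].
Qed.

Definition newval (k : nat) (h : nat -> nat) : nat :=
  match rep k with
  | SX _ => epsN (fun x => h (pred k) < x /\ infinite_nat (section A x))
  | SY j => epsN (fun y => h (pred k) < y /\ A (h (r (SX j))) y = true)
  end.

Fixpoint Hh (k : nat) : nat -> nat :=
  match k with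
  | 0 => fun _ => newval 0 (fun _ => 0)
  | S k => fun i => if i <=? k then Hh k i else newval (S k) (Hh k)
  end.
Definition g (k : nat) : nat := Hh k k.

Lemma Hstab k i : i <= k -> Hh k i = g i.
Proof.
  induction k as [|k IH]; intros Hi.
  - assert (i = 0) by lia. subst. reflexivity.
  - destruct (Nat.eq_dec i (S k)); [subst; reflexivity|].
    simpl. replace (i <=? k) with true by (symmetry; apply Nat.leb_le; lia). apply IH; lia.
Qed.

Lemma gS k : g (S k) = newval (S k) (Hh k).
Proof. unfold g. change (Hh (S k) (S k)) with (if S k <=? k then Hh k (S k) else newval (S k) (Hh k)). replace (S k <=? k) with false; auto. symmetry; apply Nat.leb_gt; lia. Qed.

Lemma rep_SY_r k j : rep k = SY j -> r (SX j) < k.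
Proof.
  intros E. destruct (L_XY j) as [_ N]. rewrite <- (r_rep k), E.
  destruct (le_lt_dec (r (SY j)) (r (SX j))) as [D|D]; auto. exfalso. apply N, le_r, D.
Qed.

Lemma rep_r_SX j : exists j', rep (r (SX j)) = SX j'.
Proof. apply (proj1 (cls_SX j)). apply r_spec. Qed.

Definition Q (k : nat) : Prop :=
  (forall j, rep k = SX j -> infinite_nat (section A (g k))) /\
  (forall j, rep k = SY j -> A (g (r (SX j))) (g k) = true) /\
  (match k with 0 => True | S k' => g k' < g k end).

Lemma allQ : forall k, Q k.
Proof.
  intros k. induction k as [k IH] using lt_wf_ind.
  destruct HA as [H1 [H2 [H3 [H4 H5]]]].
  destruct k as [|k].
  - unfold Q. change (g 0) with (newval 0 (fun _ => 0)). unfold newval. split; [|split; auto].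
    + intros j E. rewrite E. apply (epsN_spec (fun x => 0 < x /\ infinite_nat (section A x))).
      destruct (H1 1) as [x [Hx Hi]]. exists x. split; auto.
    + intros j E. pose proof (rep_SY_r 0 j E). lia.
  - unfold Q. rewrite gS. unfold newval. simpl pred. rewrite (Hstab k k) by lia.
    destruct (rep (S k)) as [j|j] eqn:E.
    + pose proof (epsN_spec (fun x => g k < x /\ infinite_nat (section A x))) as S.
      destruct S as [S1 S2].
      * destruct (H1 (S (g k))) as [x [Hx Hi]]. exists x. split; [lia|auto].
      * split; [intros; auto|split; [intros; discriminate|auto]].
    + pose proof (rep_SY_r (S k) j E) as Hm. rewrite (Hstab k (r (SX j))) by lia.
      destruct (rep_r_SX j) as [j' Ej'].
      destruct (IH (r (SX j)) Hm) as [Q1 _]. specialize (Q1 j' Ej').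
      pose proof (epsN_spec (fun y => g k < y /\ A (g (r (SX j))) y = true)) as S.
      destruct S as [S1 S2].
      * destruct (Q1 (S (g k))) as [y [Hy Ay]]. exists y. split; [lia|auto].
      * split; [intros; discriminate|split; [intros j0 E0; injection E0 as <-; auto|auto]].
Qed.

Lemma g_mono : forall i j, i < j -> g i < g j.
Proof.
  intros i j H. induction H.
  - destruct (allQ (S i)) as [_ [_ X]]. exact X.
  - destruct (allQ (S m)) as [_ [_ X]]. lia.
Qed.

Definition da (i : nat) : nat := g (r (SX i)).
Definition db (i : nat) : nat := g (r (SY i)).

Lemma ord_equiv s t : le s t <-> ord da db s t.
Proof.
  assert (E : forall s, interp da db s = g (r s)) by (intros [i|i]; reflexivity).
  unfold ord. rewrite !E, le_r. split.
  - intros H. destruct (Nat.eq_dec (r s) (r t)) as [D|D]; [rewrite D; auto|].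
    pose proof (g_mono (r s) (r t)). lia.
  - apply (smono_le g g_mono).
Qed.

Lemma good_d : good da db.
Proof.
  constructor.
  - intros i j H. destruct (L_Y i j H) as [_ N]. rewrite ord_equiv in N. unfold ord in N; simpl in N. lia.
  - intros i. destruct (L_XY i) as [_ N]. rewrite ord_equiv in N. unfold ord in N; simpl in N. lia.
  - intros i j E. assert (Hs : seqv le (SX i) (SY j)).
    { split; apply ord_equiv; unfold ord; simpl; lia. }
    destruct (proj1 (cls_SX i) _ Hs). discriminate.
  - intros i n. destruct ((proj2 (cls_SX i)) n) as [j [Hj Ej]]. exists j. split; auto.
    unfold da. destruct Ej as [E1 E2]. apply le_r in E1, E2. f_equal. lia.
  - intros n. destruct (L_inf (map rep (seq 0 (S n)))) as [i Hi]. exists i.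
    assert (n < r (SX i)).
    { destruct (le_lt_dec (r (SX i)) n) as [D|D]; auto. exfalso.
      apply (Hi (rep (r (SX i)))); [|apply r_spec].
      apply in_map, in_seq. lia. }
    unfold da. pose proof (smono_ge g g_mono (r (SX i))). lia.
Qed.

Lemma d_sub i : A (da i) (db i) = true.
Proof.
  assert (E : rep (r (SY i)) = SY i) by (apply cls_SY, r_spec).
  destruct (allQ (r (SY i))) as [_ [Q2 _]]. apply (Q2 i E).
Qed.

Lemma density : exists B, subset2 B A /\ P_tau le B.
Proof.
  exists (Bab da db). pose proof (Bab_spec da db (g1 _ _ good_d)) as BS. split.
  - intros x y Hxy. apply BS in Hxy as [i [<- <-]]. apply d_sub.
  - split; [apply good_inP, good_d|]. exists da, db. split; [apply good_d|]. split; [apply BS|].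
    apply ord_equiv.
Qed.
End Dens.

Theorem mainTheorem11 :
  (* each P_tau is Borel and dense in P *)
  (forall tau : Sym -> Sym -> Prop, omega_type tau ->
     Borel (P_tau tau) /\
     (forall A : set2, inP A -> exists B : set2, subset2 B A /\ P_tau tau B)) /\
  (* the P_tau partition P: every A in P realizes exactly one omega-type *)
  (forall A : set2, inP A -> exists tau, omega_type tau /\ P_tau tau A) /\
  (forall (A : set2) tau tau', P_tau tau A -> P_tau tau' A ->
     forall s t, tau s t <-> tau' s t) /\
  (* each piece is nonempty *)
  (forall tau, omega_type tau -> exists A : set2, P_tau tau A) /\
  (* there are continuum many omega-types *)
  (exists f : (nat -> bool) -> (Sym -> Sym -> Prop),
     (forall u, omega_type (f u)) /\
     (forall u v, (forall s t, f u s t <-> f v s t) -> u = v)).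
Proof.
  split; [|split; [|split; [|split]]].
  - intros tau Hot. split; [apply Borel_P_tau|]. intros A HA. apply (density tau Hot A HA).
  - apply exist_type.
  - apply uniq_type.
  - intros tau Hot.
    destruct (density tau Hot (Bab (aU (fun _ => false)) b0) (good_inP _ _ (good_aU _))) as [B [_ HB]].
    exists B. exact HB.
  - apply continuum.
Qed.
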